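(* Let $\mathcal E$ be a nest on a complex Banach space $X$ and let $E\in\mathcal E$. Then the weak*-closure in $X^*$ of $\operatorname{span}\{N^\perp: N\in\mathcal E,\ N_+\supsetneq E\}$ equals $E^\perp$.
   Context: A nest $\mathcal E$ on $X$ is a family of closed linear subspaces of $X$, totally ordered by inclusion, containing $\{0\}$ and $X$, and closed under arbitrary meets $\wedge$ (intersections) and joins $\vee$ (norm-closed linear spans of unions). For $E\in\mathcal E$, $E_+=\wedge\{F\in\mathcal E: E\subsetneq F\}$ (with the empty meet equal to $X$). For $S\subseteq X$, $S^\perp=\{f\in X^*: f(s)=0\ \forall s\in S\}$. *)

(* Defs.v *)
From HB Require Import structures.
From mathcomp Require Import all_boot all_order all_algebra.
From mathcomp Require Import all_classical all_reals all_analysis.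
From mathcomp Require Import complex.
Import Order.TTheory GRing.Theory Num.Theory.
Import numFieldTopology.Exports numFieldNormedType.Exports.

Set Implicit Arguments.
Unset Strict Implicit.
Unset Printing Implicit Defensive.

Local Open Scope classical_set_scope.
Local Open Scope ring_scope.

(* The complex numbers over a real type R, seen as a numClosedFieldType so
   that mathcomp-analysis equips it with its norm topology. *)
Definition Cplx (R : realType) : numClosedFieldType := R[i].

Section Nests.
Variables (R : realType) (X : completeNormedModType (Cplx R)).

Definition lin_subspace (E : set X) : Prop :=
  E 0 /\ forall (a : Cplx R) (x y : X), E x -> E y -> E (a *: x + y).

Definition closed_subspace (E : set X) : Prop :=
  lin_subspace E /\ closed E.

Definition lspan (S : set X) : set X :=
  \bigcap_(F in [set F | lin_subspace F /\ S `<=` F]) F.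

Definition nest_meet (F : set (set X)) : set X := \bigcap_(A in F) A.

Definition nest_join (F : set (set X)) : set X :=
  closure (lspan (\bigcup_(A in F) A)).

Definition nest (N : set (set X)) : Prop :=
  (forall E, N E -> closed_subspace E) /\
  (forall E F, N E -> N F -> E `<=` F \/ F `<=` E) /\
  N [set 0] /\ N setT /\
  (forall F, F `<=` N -> N (nest_meet F)) /\
  (forall F, F `<=` N -> N (nest_join F)).

Definition nest_succ (N : set (set X)) (E : set X) : set X :=
  nest_meet [set F | N F /\ E `<` F].

Definition dual_elt (f : X -> Cplx R) : Prop :=
  (forall (a : Cplx R) (x y : X), f (a *: x + y) = a * f x + f y) /\
  continuous f.

Definition perp (S : set X) : set (X -> Cplx R) :=
  [set f | dual_elt f /\ forall s, S s -> f s = 0].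

Definition fspan (S : set (X -> Cplx R)) : set (X -> Cplx R) :=
  [set g | exists (n : nat) (c : 'I_n -> Cplx R) (f : 'I_n -> X -> Cplx R),
     (forall i, S (f i)) /\ g = (fun x => \sum_(i < n) c i * f i x)].

(* weak*-closure in X^* of a set S of functionals: the f in X^* every
   basic weak*-neighbourhood of which meets S *)
Definition wstar_closure (S : set (X -> Cplx R)) : set (X -> Cplx R) :=
  [set f | dual_elt f /\
     forall (n : nat) (xs : 'I_n -> X) (eps : Cplx R), 0 < eps ->
       exists g, S g /\ forall i, `|f (xs i) - g (xs i)| < eps].

End Nests.

(* Main.v *)
Require Import Defs.
From HB Require Import structures.
From mathcomp Require Import all_boot all_order all_algebra.
From mathcomp Require Import all_classical all_reals all_analysis.
From mathcomp Require Import complex.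
From mathcomp Require Import ring lra.
Import Order.TTheory GRing.Theory Num.Theory.
Import numFieldTopology.Exports numFieldNormedType.Exports.
Local Open Scope classical_set_scope.
Local Open Scope ring_scope.
Local Open Scope complex_scope.

Section T.
Variables (R : realType) (X : completeNormedModType (Cplx R)).
Definition rs (a : R) (x : X) : X := ((a%:C : R[i]) : Cplx R) *: x.
Definition pn (x : X) : R := complex.Re (`|x| : Cplx R).
Lemma normC_real (r : R) : `|(r%:C : Cplx R)| = (`|r|)%:C.
Proof. by rewrite normc_def /= expr0n /= addr0 sqrtr_sqr. Qed.
Lemma pnE x : (pn x)%:C = `|x|.
Proof. by rewrite /pn RRe_real // normr_real. Qed.
Lemma pn_ge0 x : 0 <= pn x.
Proof. by rewrite -lecR pnE (rmorph0 (real_complex R)). Qed.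
Lemma pnD x y : pn (x + y) <= pn x + pn y.
Proof. by rewrite -lecR rmorphD /= !pnE ler_normD. Qed.
Lemma pnZ a x : pn (rs a x) = `|a| * pn x.
Proof. apply: complexI. by rewrite rmorphM /= !pnE /rs normrZ normC_real. Qed.
Lemma rsE a b x : rs (a * b) x = rs a (rs b x).
Proof. by rewrite /rs scalerA rmorphM. Qed.
Lemma rsD a b x : rs (a + b) x = rs a x + rs b x.
Proof. by rewrite /rs rmorphD scalerDl. Qed.
Lemma rs1 x : rs 1 x = x. Proof. by rewrite /rs rmorph1 scale1r. Qed.
Lemma rs0 x : rs 0 x = 0. Proof. by rewrite /rs rmorph0 scale0r. Qed.
Lemma rsN1 x : rs (-1) x = - x. Proof. by rewrite /rs rmorphN rmorph1 scaleN1r. Qed.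
Lemma rsxD a x y : rs a (x + y) = rs a x + rs a y. Proof. by rewrite /rs scalerDr. Qed.
Lemma rsxN a x : rs a (- x) = - rs a x. Proof. by rewrite /rs scalerN. Qed.
Lemma test (a b : R) : (a + b)%:C = a%:C + b%:C :> Cplx R.
Proof. by rewrite rmorphD. Qed.
Lemma rsB a b x : rs (a - b) x = rs a x - rs b x.
Proof. by rewrite /rs rmorphB scalerBl. Qed.
Lemma rsNa a x : rs (- a) x = - rs a x.
Proof. by rewrite /rs rmorphN scaleNr. Qed.

Definition gfun (G : set (X * R)) := forall x r s, G (x,r) -> G (x,s) -> r = s.
Definition glin (G : set (X * R)) :=
  forall a x r y s, G (x,r) -> G (y,s) -> G (rs a x + y, a * r + s).
Definition gdom (G : set (X * R)) := forall x r, G (x,r) -> r <= pn x.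

Lemma glin0 G x r : glin G -> G (x,r) -> G (0,0).
Proof.
move=> Gl h; have := Gl (-1) x r x r h h.
by rewrite rsN1 addNr mulN1r addNr.
Qed.

Lemma glinZ G a x r : glin G -> G (0,0) -> G (x,r) -> G (rs a x, a * r).
Proof. by move=> Gl G0 h; have := Gl a x r 0 0 h G0; rewrite !addr0. Qed.

Lemma extend G z : gfun G -> glin G -> gdom G -> G (0,0) -> (forall r, ~ G (z,r)) ->
  exists G', [/\ gfun G', glin G', gdom G' & G `<` G'].
Proof.
move=> Gf Gl Gd G0 Gz.
pose S := [set v | exists w s, G (w,s) /\ v = s - pn (w - z)].
have key w1 s1 w2 s2 : G (w1,s1) -> G (w2,s2) ->
    s1 - pn (w1 - z) <= pn (w2 + z) - s2.
  move=> h1 h2; have h := Gd _ _ (Gl 1 _ _ _ _ h1 h2); rewrite rs1 mul1r in h.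
  have : pn (w1 + w2) <= pn (w1 - z) + pn (w2 + z).
    have -> : w1 + w2 = (w1 - z) + (w2 + z) by rewrite addrACA addNr addr0.
    exact: pnD.
  lra.
have hS : has_sup S.
  split; first by exists (0 - pn (0 - z)); exists 0, 0.
  exists (pn (0 + z) - 0) => v [w [s [h ->]]]; exact: key.
pose c := sup S.
have cge w s : G (w,s) -> s - pn (w - z) <= c.
  by move=> h; apply: sup_upper_bound => //; exists w, s.
have cle w s : G (w,s) -> c <= pn (w + z) - s.
  move=> h; apply: ge_sup; first by case: hS.
  by move=> v [w1 [s1 [h1 ->]]]; exact: key.
pose G' := [set q | exists w s t, G (w,s) /\ q = (w + rs t z, s + t * c)].
exists G'; split.
- move=> x r1 r2 [w1 [s1 [t1 [h1 e1]]]] [w2 [s2 [t2 [h2 e2]]]].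
  case: e1 => ex1 ->; case: e2 => ex2 ->.
  have et : t1 = t2.
    apply/eqP; apply/negP => /negP nt.
    have ht : t1 - t2 != 0 by rewrite subr_eq0.
    have e : rs (t1 - t2) z = w2 - w1.
      rewrite rsB; apply/eqP; rewrite subr_eq; apply/eqP; apply: (addrI w1).
      by rewrite -ex1 ex2 addrA [w1 + _]addrC subrK.
    have hG : G (w2 - w1, - s1 + s2).
      by have := Gl (-1) _ _ _ _ h1 h2; rewrite rsN1 mulN1r addrC.
    apply: (Gz ((t1 - t2)^-1 * (- s1 + s2))).
    have -> : z = rs (t1 - t2)^-1 (w2 - w1) by rewrite -e -rsE mulVf // rs1.
    exact: glinZ.
  subst t2; have ew : w1 = w2 by apply: (addIr (rs t1 z)); rewrite -ex1 -ex2.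
  subst w2; by rewrite (Gf _ _ _ h1 h2).
- move=> a x r y s [w1 [s1 [t1 [h1 e1]]]] [w2 [s2 [t2 [h2 e2]]]].
  case: e1 => -> ->; case: e2 => -> ->.
  exists (rs a w1 + w2), (a * s1 + s2), (a * t1 + t2); split; first exact: Gl.
  congr pair; first by rewrite rsxD rsD rsE addrACA.
  ring.
- move=> x r [w [s [t [h e]]]]; case: e => -> ->.
  have [t0|t0|->] := ltgtP t 0; last by rewrite rs0 addr0 mul0r addr0; exact: Gd.
  + pose u := - t; have u0 : 0 < u by rewrite /u oppr_gt0.
    have hc := cge _ _ (glinZ _ u^-1 _ _ Gl G0 h).
    have eq : w + rs t z = rs u (rs u^-1 w - z).
      by rewrite rsxD rsxN -rsE mulfV ?gt_eqF // rs1 -rsNa /u opprK.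
    rewrite eq pnZ gtr0_norm //.
    have := ler_wpM2l (ltW u0) hc.
    rewrite mulrBr mulrA mulfV ?gt_eqF // mul1r /u.
    lra.
  + have hc := cle _ _ (glinZ _ t^-1 _ _ Gl G0 h).
    have eq : w + rs t z = rs t (rs t^-1 w + z).
      by rewrite rsxD -rsE mulfV ?gt_eqF // rs1.
    rewrite eq pnZ gtr0_norm //.
    have := ler_wpM2l (ltW t0) hc.
    rewrite mulrBr mulrA mulfV ?gt_eqF // mul1r.
    lra.
- split.
  + move=> [x r] h; exists x, r, 0; split => //.
    by rewrite rs0 addr0 mul0r addr0.
  + move=> sub; apply: (Gz c); apply: sub; exists 0, 0, 1; split => //.
    by rewrite rs1 add0r mul1r add0r.
Qed.

Lemma hb_real (G0 : set (X * R)) : gfun G0 -> glin G0 -> gdom G0 -> G0 (0,0) ->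
  exists u : X -> R, [/\ (forall a x y, u (rs a x + y) = a * u x + u y),
    (forall x, u x <= pn x) & (forall x r, G0 (x,r) -> u x = r)].
Proof.
move=> f0 l0 d0 z0.
pose P := fun G : set (X * R) => (gfun G /\ glin G /\ gdom G /\ G0 `<=` G) \/ G = set0.
have [A [PA maxA]] : exists A, P A /\ forall B, A `<` B -> ~ P B.
  apply: Zorn_bigcup => F FP tot.
  have props G q : F G -> G q -> gfun G /\ glin G /\ gdom G /\ G0 `<=` G.
    move=> FG Gq; case: (FP G FG) => // e; by rewrite e in Gq.
  case: (pselect (exists G, F G /\ G !=set0)) => [[G1 [FG1 [q1 G1q]]] | none]; last first.
    right; apply/seteqP; split => // q [G FG Gq]; apply: none; exists G; split => //.
    by exists q.
  left; split; [|split; [|split]].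
  - move=> x r s [Ga Fa ha] [Gb Fb hb].
    case: (tot _ _ Fa Fb) => sub.
    + exact: (props _ _ Fb hb).1 _ _ _ (sub _ ha) hb.
    + exact: (props _ _ Fa ha).1 _ _ _ ha (sub _ hb).
  - move=> a x r y s [Ga Fa ha] [Gb Fb hb].
    case: (tot _ _ Fa Fb) => sub.
    + exists Gb => //; exact: (props _ _ Fb hb).2.1 _ _ _ _ _ (sub _ ha) hb.
    + exists Ga => //; exact: (props _ _ Fa ha).2.1 _ _ _ _ _ ha (sub _ hb).
  - move=> x r [Ga Fa ha]; exact: (props _ _ Fa ha).2.2.1.
  - move=> q G0q; exists G1 => //; exact: (props _ _ FG1 G1q).2.2.2.
have [Af [Al [Ad As]]] : gfun A /\ glin A /\ gdom A /\ G0 `<=` A.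
  case: PA => // A0; exfalso; apply: (maxA G0); last by left; split => //; split => //; split => // ? .
  rewrite A0; split; first exact: sub0set.
  move=> sub; exact: (sub _ z0).
have A00 : A (0,0) by apply: As.
have tot x : exists r, A (x,r).
  apply/not_existsP => nx.
  have [G' [f' l' d' AG']] := extend _ x Af Al Ad A00 nx.
  apply: (maxA G') => //; left; split => //; split => //; split => //.
  move=> q /As hq; case: AG' => sub _; exact: sub.
pose u x := xget 0 [set r | A (x,r)].
have hu x : A (x, u x) by exact: (xgetPex 0 (tot x)).
exists u; split.
- by move=> a x y; apply: (Af _ _ _ (hu _)); apply: Al.
- by move=> x; apply: Ad.
- by move=> x r /As h; apply: (Af _ _ _ (hu _)).
Qed.

Lemma sepR (M : set X) y : closed_subspace M -> ~ M y ->
  exists u : X -> R, [/\ (forall a x v, u (rs a x + v) = a * u x + u v),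
    (forall x, u x <= pn x), (forall m, M m -> u m = 0) & u y != 0].
Proof.
move=> [[M0 Ml] Mc] My.
have Mrs a m : M m -> M (rs a m).
  by move=> h; have := Ml (a%:C) m 0 h M0; rewrite addr0.
have MD m1 m2 : M m1 -> M m2 -> M (m1 + m2).
  by move=> h1 h2; have := Ml 1 m1 m2 h1 h2; rewrite scale1r.
have MN m : M m -> M (- m) by move=> h; rewrite -rsN1; exact: Mrs.
have [d d0 hd] : exists2 d : R, 0 < d & forall m, M m -> d <= pn (y - m).
  have : ~ closure M y by move=> /Mc.
  move=> /existsNP [B /not_implyP [nB hB]].
  move: nB => /nbhs_ballP [e e0 eB].
  have er : (complex.Re e)%:C = e by rewrite RRe_real // gtr0_real.
  exists (complex.Re e); first by rewrite -ltcR er (rmorph0 (real_complex R)).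
  move=> m Mm; rewrite leNgt; apply/negP => lt.
  apply: hB; exists m; split => //; apply: eB.
  rewrite -ball_normE /ball_ /= -pnE -er ltcR; exact: lt.
pose G0 := [set q | exists m t, M m /\ q = (m + rs t y, t * d)].
have f0 : gfun G0.
  move=> x r1 r2 [m1 [t1 [h1 e1]]] [m2 [t2 [h2 e2]]].
  case: e1 => ex1 ->; case: e2 => ex2 ->.
  have et : t1 = t2.
    apply/eqP; apply/negP => /negP nt.
    have ht : t1 - t2 != 0 by rewrite subr_eq0.
    have e : rs (t1 - t2) y = m2 - m1.
      rewrite rsB; apply/eqP; rewrite subr_eq; apply/eqP; apply: (addrI m1).
      by rewrite -ex1 ex2 addrA [m1 + _]addrC subrK.
    apply: My; have -> : y = rs (t1 - t2)^-1 (m2 - m1) by rewrite -e -rsE mulVf // rs1.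
    by apply: Mrs; rewrite addrC; apply: MD => //; exact: MN.
  by rewrite et.
have l0 : glin G0.
  move=> a x r v s [m1 [t1 [h1 e1]]] [m2 [t2 [h2 e2]]].
  case: e1 => -> ->; case: e2 => -> ->.
  exists (rs a m1 + m2), (a * t1 + t2); split; first by apply: MD => //; exact: Mrs.
  congr pair; first by rewrite rsxD rsD rsE addrACA.
  ring.
have d0' : gdom G0.
  move=> x r [m [t [h e]]]; case: e => -> ->.
  have [t0|t0] := leP t 0.
    apply: le_trans (pn_ge0 _); rewrite -(mul0r d) ler_wpM2r //; exact: ltW.
  have eq : m + rs t y = rs t (y - - rs t^-1 m).
    by rewrite opprK rsxD -rsE mulfV ?gt_eqF // rs1 addrC.
  rewrite eq pnZ gtr0_norm // ler_wpM2l ?(ltW t0) //.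
  by apply: hd; apply: MN; apply: Mrs.
have z0 : G0 (0,0) by exists 0, 0; split => //; rewrite rs0 addr0 mul0r.
have [u [ul ub uG]] := hb_real _ f0 l0 d0' z0.
exists u; split => //.
- move=> m Mm; apply: uG; exists m, 0; split => //; by rewrite rs0 addr0 mul0r.
- have -> : u y = d by apply: uG; exists 0, 1; split => //; rewrite rs1 add0r mul1r.
  exact: lt0r_neq0.
Qed.

Lemma normi : `|'i : Cplx R| = 1.
Proof. by rewrite normc_def /= expr0n /= add0r expr1n sqrtr1. Qed.

Lemma cid (a b U V W Z : R) : ((a * U + (b * V + W))%:C - 'i * (a * V + (- b * U + Z))%:C : R[i]) = (a%:C + 'i * b%:C) * (U%:C - 'i * V%:C) + (W%:C - 'i * Z%:C).
Proof. apply/eqP; rewrite eq_complex /=. apply/andP; split; apply/eqP; ring. Qed.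

Lemma bound_cont (g : X -> Cplx R) :
  (forall a x v, g (a *: x + v) = a * g x + g v) ->
  (forall x, `|g x| <= 2 * `|x|) -> continuous g.
Proof.
move=> gl gb x; apply/cvgrPdist_lt => e e0.
have e2 : 0 < e / 2 by rewrite divr_gt0.
have := proj1 (cvgrPdist_lt (@id X) x) cvg_id (e/2) e2.
move=> /(_ (nbhs_filter x)); apply: filterS => t ht.
have g0 : g 0 = 0.
  have := gl 1 0 0; rewrite scaler0 addr0 mul1r => /(congr1 (fun w => w - g 0)).
  by rewrite subrr addrK.
have gN w : g (- w) = - g w.
  by have := gl (-1) w 0; rewrite addr0 g0 addr0 scaleN1r mulN1r.
have -> : g x - g t = g (x - t).
  by have := gl 1 x (- t); rewrite scale1r mul1r gN.
apply: le_lt_trans (gb _) _.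
have -> : e = 2 * (e / 2) by rewrite mulrC divfK // pnatr_eq0.
by rewrite ltr_pM2l.
Qed.

Lemma sepC (M : set X) y : closed_subspace M -> ~ M y ->
  exists g : X -> Cplx R, [/\ dual_elt g, (forall m, M m -> g m = 0) & g y != 0].
Proof.
move=> hM My; have [u [ul ub uM uy]] := sepR _ _ hM My.
have [[M0 Ml] _] := hM.
have u0 : u 0 = 0.
  have h := ul 1 0 0; rewrite rs1 addr0 mul1r in h; lra.
have uD x v : u (x + v) = u x + u v by have := ul 1 x v; rewrite rs1 mul1r.
have uZ a x : u (rs a x) = a * u x by have := ul a x 0; rewrite !addr0 u0 addr0.
have uN x : u (- x) = - u x by rewrite -rsN1 uZ mulN1r.
have uabs x : `|u x| <= pn x.
  rewrite ler_norml ub andbT lerNl -uN; apply: le_trans (ub _) _.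
  by rewrite -rsN1 pnZ normrN normr1 mul1r.
have pni x : pn ('i *: x) = pn x.
  by apply: complexI; rewrite !pnE normrZ normi mul1r.
pose g x : Cplx R := (u x)%:C - 'i * (u ('i *: x))%:C.
have gl : forall (a : Cplx R) x v, g (a *: x + v) = a * g x + g v.
  move=> [a b] x v.
  have hc : (a +i* b : R[i]) = a%:C + 'i * b%:C by rewrite [LHS]complexE.
  have e1 : (a +i* b : Cplx R) *: x + v = rs a x + (rs b ('i *: x) + v).
    by rewrite hc scalerDl mulrC -scalerA /rs addrA.
  have ii : 'i * b%:C * 'i = (-b)%:C :> R[i].
    by rewrite mulrC mulrA -expr2 sqr_i mulN1r rmorphN.
  have e2 : 'i *: ((a +i* b : Cplx R) *: x + v) = rs a ('i *: x) + (rs (-b) x + 'i *: v).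
    rewrite e1 !scalerDr /rs !scalerA mulrC ii; congr (_ + _).
  rewrite /g e2 e1 !uD !uZ hc; exact: cid.
exists g; split.
- split; first exact: gl.
  apply: bound_cont => // x.
  apply: le_trans (ler_normB _ _) _.
  rewrite normrM normi mul1r !normC_real.
  have -> : 2 * `|x| = (pn x + pn x)%:C.
    by rewrite rmorphD /= !pnE mulr_natl mulr2n.
  by rewrite -rmorphD lecR; apply: lerD => //; rewrite -(pni x).
- move=> m Mm; rewrite /g uM // uM; last by have := Ml 'i m 0 Mm M0; rewrite addr0.
  by rewrite (rmorph0 (real_complex R)) mulr0 subr0.
- apply/eqP => h; have hr := congr1 (@complex.Re R) h.
  rewrite /g /= mul0r mulr0 subrr subr0 in hr.
  by move: uy; rewrite hr eqxx.
Qed.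
End T.

Lemma perp_fin (K : fieldType) n (L : set 'rV[K]_n) : L 0 ->
  (forall a l l', L l -> L l' -> L (a *: l + l')) ->
  forall v, ~ L v -> exists C : 'M[K]_n, (forall l, L l -> l *m C = 0) /\ v *m C != 0.
Proof.
move=> L0 Ll v nv.
have LD l l' : L l -> L l' -> L (l + l') by move=> h h'; have := Ll 1 l l' h h'; rewrite scale1r.
have Lsum m (A : 'M[K]_(m, n)) w : (forall i, L (row i A)) -> L (w *m A).
  move=> hA; rewrite mulmx_sum_row; elim/big_ind: _ => //.
  by move=> i _; have := Ll (w 0 i) _ 0 (hA i) L0; rewrite addr0.
have [m [A [hA hsub]]] : exists m (A : 'M[K]_(m, n)), (forall i, L (row i A)) /\
    forall l, L l -> (l <= A)%MS.
  apply/not_existsP => H.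
  suff : forall k, exists m (A : 'M[K]_(m, n)), (forall i, L (row i A)) /\ (k <= \rank A)%N.
    move=> /(_ n.+1) [m [A [_ hr]]]; have := rank_leq_col A => h; have := leq_trans hr h; by rewrite ltnn.
  elim=> [|k [m [A [hA hr]]]].
    by exists 0%N, 0; split => // -[].
  have : ~ (forall l, L l -> (l <= A)%MS).
    by move=> h; apply: (H m); exists A; split.
  move=> /existsNP [l /not_implyP [Lll nsub]].
  exists (m + 1)%N, (col_mx A l); split.
    move=> i; case: (splitP i) => j ij.
      have -> : i = lshift 1 j by apply/val_inj.
      by rewrite rowKu.
    have -> : i = rshift m j by apply/val_inj.
    rewrite rowKd ord1; have -> : row 0 l = l by apply/rowP => q; rewrite mxE.
    done.
  have := submx_refl (col_mx A l); rewrite col_mx_sub => /andP [sA _].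
  have := ltn_leqif (mxrank_leqif_sup sA).
  rewrite col_mx_sub negb_and (negbTE (introN idP nsub)) orbT => lt.
  by apply: leq_trans lt; rewrite ltnS.
exists (cokermx A); split.
  by move=> l /hsub; rewrite submxE => /eqP.
apply/negP; rewrite -submxE => /submxP [D e].
by apply: nv; rewrite e; apply: Lsum.
Qed.
Section Main.
Variables (R : realType) (X : completeNormedModType (Cplx R)).

Definition lin (g : X -> Cplx R) := forall a x v, g (a *: x + v) = a * g x + g v.

Lemma lin0 g : lin g -> g 0 = 0.
Proof.
move=> gl; have := gl 1 0 0; rewrite scaler0 addr0 mul1r => /(congr1 (fun w => w - g 0)).
by rewrite subrr addrK.
Qed.

Lemma lin_sum g n (c : 'I_n -> Cplx R) (xs : 'I_n -> X) : lin g ->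
  g (\sum_(i < n) c i *: xs i) = \sum_(i < n) c i * g (xs i).
Proof.
move=> gl; have g0 := lin0 _ gl.
have gD : {morph g : x y / x + y >-> x + y}.
  by move=> x y; have := gl 1 x y; rewrite scale1r mul1r.
rewrite (big_morph g gD g0); apply: eq_bigr => i _.
by have := gl (c i) (xs i) 0; rewrite !addr0 g0 addr0.
Qed.

Lemma fspan_lin (S : set (X -> Cplx R)) g : (forall h, S h -> lin h) -> fspan S g -> lin g.
Proof.
move=> hS [n [c [f [hf ->]]]] a x v /=.
rewrite mulr_sumr -big_split /=; apply: eq_bigr => i _.
by rewrite (hS _ (hf i)) mulrDr mulrCA.
Qed.

Lemma fspan_closed (S : set (X -> Cplx R)) a g h : fspan S g -> fspan S h ->
  fspan S (fun x => a * g x + h x).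
Proof.
move=> [n [c [f [hf ->]]]] [m [c' [f' [hf' ->]]]].
pose cc (i : 'I_(n + m)) := match fintype.split i with inl j => a * c j | inr j => c' j end.
pose ff (i : 'I_(n + m)) := match fintype.split i with inl j => f j | inr j => f' j end.
exists (n + m)%N, cc, ff; split.
  by move=> i; rewrite /ff; case: (fintype.split i).
apply: funext => x; rewrite big_split_ord /= mulr_sumr; congr (_ + _).
  apply: eq_bigr => i _; rewrite /cc /ff.
  have -> : fintype.split (lshift m i) = inl i by exact: (unsplitK (inl i)).
  by rewrite mulrA.
apply: eq_bigr => i _; rewrite /cc /ff.
by have -> : fintype.split (rshift n i) = inr i by exact: (unsplitK (inr i)).
Qed.

Lemma fspan0 (S : set (X -> Cplx R)) : fspan S (fun _ => 0).
Proof.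
exists 0%N, (fun _ => 0), (fun _ _ => 0); split; first by case.
by apply: funext => x; rewrite big_ord0.
Qed.

Lemma fspan1 (S : set (X -> Cplx R)) g : S g -> fspan S g.
Proof.
move=> Sg; exists 1%N, (fun _ => 1), (fun _ => g); split => //.
by apply: funext => x; rewrite big_ord1 mul1r.
Qed.

End Main.
Arguments lin {R X}.
Arguments lin0 {R X}.
Arguments lin_sum {R X}.
Arguments fspan_lin {R X}.
Arguments fspan_closed {R X}.
Arguments fspan0 {R X}.
Arguments fspan1 {R X}.
Arguments sepC {R X}.

Theorem mainTheorem2 (R : realType) (X : completeNormedModType (Cplx R))
    (N : set (set X)) (E : set X) :
  nest N -> N E ->
  wstar_closure (fspan (\bigcup_(M in [set M | N M /\ E `<` nest_succ N M]) perp M))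
  = perp E.
Proof.
move=> [Ncl [Ntot _]] NE.
set U := \bigcup_(M in _) _.
have succ_sup (Y : set X) : Y `<=` nest_succ N Y.
  by move=> x Yx A [NA [sub _]]; exact: sub _ Yx.
have goodE M : N M -> E `<` nest_succ N M -> E `<=` M.
  move=> NM [hs nhs]; case: (pselect (E `<=` M)) => // nEM.
  case: (Ntot M E NM NE) => // ME; exfalso; apply: nhs.
  by move=> x hx; apply: hx; split => //; split.
have Ulin h : U h -> lin h by move=> [M _ [[hl _] _]].
have Uvan g s : fspan U g -> E s -> g s = 0.
  move=> [n [c [f [hf ->]]]] Es; rewrite big1 // => i _.
  have [M [NM hM] [_ hv]] := hf i; by rewrite hv ?mulr0 //; apply: goodE hM _ Es.
apply/seteqP; split.
- move=> f [df hf]; split => // s Es; apply/eqP/negP => /negP fs.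
  have fs0 : 0 < `|f s| by rewrite normr_gt0.
  have [g [hg hgs]] := hf 1%N (fun _ => s) `|f s| fs0.
  by have := hgs ord0; rewrite (Uvan g s hg Es) subr0 ltxx.
- move=> f [df fE]; split => // n xs eps eps0.
  pose L := [set l : 'rV[Cplx R]_n | exists g, fspan U g /\ l = \row_i g (xs i)].
  pose v := \row_i f (xs i) : 'rV[Cplx R]_n.
  case: (pselect (L v)) => [[g [hg ev]] | nv].
    exists g; split => // i.
    have : v 0 i = (\row_i g (xs i)) 0 i by rewrite ev.
    by rewrite !mxE => ->; rewrite subrr normr0.
  exfalso.
  have L0 : L 0.
    exists (fun _ => 0); split; first exact: fspan0.
    by apply/rowP => i; rewrite !mxE.
  have Ll : forall a l l', L l -> L l' -> L (a *: l + l').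
    move=> a l l' [g [hg ->]] [h [hh ->]]; exists (fun x => a * g x + h x); split.
      exact: fspan_closed.
    by apply/rowP => i; rewrite !mxE.
  have [C [hC vC]] := perp_fin _ _ _ L0 Ll v nv.
  have [j hj] : exists j, (v *m C) 0 j != 0.
    apply/not_existsP => hn; move/eqP: vC; apply; apply/rowP => k.
    rewrite [RHS]mxE; apply/eqP; apply/negPn/negP => h; exact: hn k h.
  pose y := \sum_(i < n) C i j *: xs i.
  have hg g : fspan U g -> g y = 0.
    move=> hg; rewrite /y lin_sum; last exact: fspan_lin Ulin hg.
    have := congr1 (fun w : 'rV_n => w 0 j) (hC _ (ex_intro _ g (conj hg erefl))).
    rewrite !mxE => e; apply: etrans e; apply: eq_bigr => i _; by rewrite !mxE mulrC.
  have fy : f y != 0.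
    rewrite /y lin_sum; last exact: df.1.
    move: hj; rewrite !mxE; congr (_ != _); apply: eq_bigr => i _.
    by rewrite !mxE mulrC.
  have nEy : ~ E y by move=> /fE; apply/eqP.
  have [M [NM gM nMy]] : exists M, [/\ N M, E `<` nest_succ N M & ~ M y].
    case: (pselect (E `<` nest_succ N E)) => [hE | nE]; first by exists E.
    have sE : nest_succ N E `<=` E.
      apply: contra_notP nE => h; split; first exact: succ_sup.
      exact: h.
    have : ~ nest_succ N E y by move/sE.
    move=> /existsNP [F /not_implyP [[NF EF] nFy]].
    exists F; split => //.
    case: EF => EF nFE; split; first by apply: subset_trans EF (succ_sup F).
    by move=> h; apply: nFE; apply: subset_trans (succ_sup F) h.
  have [g [dg gM0 gy]] := sepC M y (Ncl M NM) nMy.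
  have Ug : U g by exists M => //; split => // m hm; exact: gM0.
  by move: gy; rewrite (hg g (fspan1 _ _ Ug)) eqxx.
Qed.
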